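(* Let $n\ge 3$, let $d$ be an integer, and let $i,j\in[n-1]$ with $\lvert i-j\rvert=1$. Then \[ b_{n,d}(i,j)=b_{n-2,\,d-1}\quad\text{and}\quad p_{n,d}(i,j)=p_{n-2,\,d-1}. \]
   Context: For a word $w=w_1\cdots w_k$ of pairwise distinct positive integers, an index $t\in[k-1]$ is an ascent if $w_t<w_{t+1}$ and a descent if $w_t>w_{t+1}$; $\operatorname{des}(w)$ is the number of descents and the height is $h(w)=(\#\text{ascents})-(\#\text{descents})$ (so $h(w)=0$ if $k\le 1$). A word is ballot if every prefix has nonnegative height. A ballot permutation of $[n]$ is a permutation $\pi_1\cdots\pi_n$ (one-line notation) that is a ballot word. $\mathscr{B}_{n,d}$ is the set of ballot permutations of $[n]$ with exactly $d$ descents, $b_{n,d}=\lvert\mathscr{B}_{n,d}\rvert$ (so $b_{m,d}=0$ for $d<0$), and $b_{n,d}(i,j)$ is the number of $\pi\in\mathscr{B}_{n,d}$ containing $i\,n\,j$ as a factor, i.e. $\pi_t=i,\pi_{t+1}=n,\pi_{t+2}=j$ for some $t$. A cycle $(c_1c_2\cdots c_k)$ of a permutation means $c_1\mapsto c_2\mapsto\cdots\mapsto c_k\mapsto c_1$. Its cyclic descent number is $\operatorname{cdes}(c)=\lvert\{t\in[k]: c_t>c_{t+1}\}\rvert$ and cyclic ascent number $\operatorname{casc}(c)=\lvert\{t\in[k]: c_t<c_{t+1}\}\rvert$, where $c_{k+1}=c_1$; its cyclic weight is $w(c)=\min(\operatorname{cdes}(c),\operatorname{casc}(c))$, and the cyclic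 weight $w(\pi)$ of a permutation is the sum of the cyclic weights of its cycles. An odd order permutation is one all of whose cycles have odd length. $\mathscr{P}_{n,d}$ is the set of odd order permutations of $[n]$ with cyclic weight $d$, $p_{n,d}=\lvert\mathscr{P}_{n,d}\rvert$, and $p_{n,d}(i,j)$ is the number of $\pi\in\mathscr{P}_{n,d}$ containing $i\,n\,j$ as a cyclic factor, i.e. some cycle of $\pi$, written starting at a suitable element, contains $i,n,j$ consecutively (equivalently $\pi(i)=n$ and $\pi(n)=j$). *)

(* Defs.v *)
From mathcomp Require Import all_boot all_order all_algebra.
From mathcomp Require Import perm.
Set Implicit Arguments. Unset Strict Implicit. Unset Printing Implicit Defensive.
Import Order.TTheory GRing.Theory Num.Theory.

Definition adj_pairs (w : seq nat) : seq (nat * nat) := zip w (behead w).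

Definition des (w : seq nat) : nat := count (fun p => p.2 < p.1) (adj_pairs w).
Definition asc (w : seq nat) : nat := count (fun p => p.1 < p.2) (adj_pairs w).

Definition height (w : seq nat) : int := (Posz (asc w)) - (Posz (des w)).

Definition ballot (w : seq nat) : bool :=
  [forall k : 'I_(size w).+1, (0 <= height (take k w))%R].

(* permutations of [n] = {1,...,n} in one-line notation *)
Definition perms_of (n : nat) : seq (seq nat) := permutations (iota 1 n).

(* b_{n,d}; zero for d < 0 *)
Definition b (n : nat) (d : int) : nat :=
  count (fun w => ballot w && ((Posz (des w)) == d)) (perms_of n).

Definition b_ij (n : nat) (d : int) (i j : nat) : nat :=
  count (fun w => [&& ballot w, (Posz (des w)) == d & infix [:: i; n; j] w]) (perms_of n).

(* A permutation of [n] is represented by s : {perm 'I_n}, the element k in [n]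
   being the ordinal k-1 (labels are recovered by adding 1). *)

Definition cycle_of (n : nat) (s : {perm 'I_n}) (x : 'I_n) : seq nat :=
  map (fun y : 'I_n => (val y).+1) (fingraph.orbit s x).

Definition cdes (c : seq nat) : nat := count (fun p => p.2 < p.1) (zip c (rot 1 c)).
Definition casc (c : seq nat) : nat := count (fun p => p.1 < p.2) (zip c (rot 1 c)).
Definition cweight_cycle (c : seq nat) : nat := minn (cdes c) (casc c).

(* x is the least element of its cycle: used to pick each cycle exactly once *)
Definition cycle_rep (n : nat) (s : {perm 'I_n}) (x : 'I_n) : bool :=
  [forall y : 'I_n, fingraph.fconnect s x y ==> (val x <= val y)].

Definition cweight (n : nat) (s : {perm 'I_n}) : nat :=
  \sum_(x : 'I_n | cycle_rep s x) cweight_cycle (cycle_of s x).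

Definition odd_order (n : nat) (s : {perm 'I_n}) : bool :=
  [forall x : 'I_n, odd (size (cycle_of s x))].

(* p_{n,d}; zero for d < 0 *)
Definition p (n : nat) (d : int) : nat :=
  #|[set s : {perm 'I_n} | odd_order s && ((Posz (cweight s)) == d)]|.

(* s contains i n j as a cyclic factor, i.e. s(i) = n and s(n) = j (labels in [n]) *)
Definition cyc_factor (n : nat) (s : {perm 'I_n}) (i j : nat) : bool :=
  [exists x : 'I_n, exists y : 'I_n,
     [&& (val x).+1 == i, (val y).+1 == n, s x == y & (val (s y)).+1 == j]].

Definition p_ij (n : nat) (d : int) (i j : nat) : nat :=
  #|[set s : {perm 'I_n} | [&& odd_order s, (Posz (cweight s)) == d & cyc_factor s i j]]|.

(* Main.v *)
Require Import Defs.
From mathcomp Require Import all_boot all_order all_algebra perm zify.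
Set Implicit Arguments. Unset Strict Implicit. Unset Printing Implicit Defensive.


Lemma map_traject (T : Type) (f : T -> T) x n :
  map f (traject f x n) = traject f (f x) n.
Proof. by elim: n x => //= n IH x; rewrite IH. Qed.

Lemma rot1_orbit (T : finType) (s : {perm T}) x :
  rot 1 (orbit s x) = map s (orbit s x).
Proof.
rewrite /orbit; have := iter_order (@perm_inj _ s) x.
have := order_gt0 s x; case: (order s x) => // N _ HN.
rewrite trajectS rot1_cons /= map_traject -trajectS trajectSr -iterSr HN.
by [].
Qed.

Lemma count_uniq_card (T : finType) (c : seq T) (P : pred T) :
  uniq c -> count P c = #|[pred z | (z \in c) && P z]|.
Proof.
move=> Uc; rewrite -size_filter -(card_uniqP (filter_uniq P Uc)).
by apply: eq_card => z; rewrite mem_filter !inE andbC.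
Qed.

Lemma cdes_cycle n (s : {perm 'I_n}) x :
  cdes (cycle_of s x) = #|[pred z | fconnect s x z && (val (s z) < val z)]|.
Proof.
rewrite /cdes /cycle_of -map_rot rot1_orbit -map_comp zip_map count_map.
rewrite count_uniq_card ?orbit_uniq //; apply: eq_card => z.
by rewrite !inE /= ltnS fconnect_orbit.
Qed.

Lemma casc_cycle n (s : {perm 'I_n}) x :
  casc (cycle_of s x) = #|[pred z | fconnect s x z && (val z < val (s z))]|.
Proof.
rewrite /casc /cycle_of -map_rot rot1_orbit -map_comp zip_map count_map.
rewrite count_uniq_card ?orbit_uniq //; apply: eq_card => z.
by rewrite !inE /= ltnS fconnect_orbit.
Qed.

Lemma size_cycle n (s : {perm 'I_n}) x :
  size (cycle_of s x) = #|fconnect s x|.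
Proof. by rewrite /cycle_of size_map size_orbit. Qed.

Ltac ifs := repeat match goal with |- context [if ?b then _ else _] =>
  (lazymatch b with context [if _ then _ else _] => fail | _ => idtac end); case: (boolP b) => ? end.

Lemma memP (T : finType) (P : pred T) z : (z \in P) = P z.
Proof. by []. Qed.

Section Lift.
Variables (q i0 j0 : nat).
Hypothesis Hi : i0 <= q.+1.
Hypothesis Hj : j0 <= q.+1.
Hypothesis Hij : (i0 == j0.+1) || (j0 == i0.+1).
Let m0 := minn i0 j0.

Definition phin z := if z <= m0 then z else if z <= q.+1 then z.-1 else m0.
Definition psin y := if y <= m0 then y else y.+1.
Definition Eon y := if y < m0 then y else if y == m0 then i0 else y.+1.
Definition Ein y := if y < m0 then y else if y == m0 then j0 else y.+1.

Definition I0 : 'I_q.+3 := inord i0.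
Definition J0 : 'I_q.+3 := inord j0.
Definition N0 : 'I_q.+3 := ord_max.
Definition Mo : 'I_q.+3 := inord m0.+1.
Definition K : 'I_q.+1 := inord m0.
Definition phi (z : 'I_q.+3) : 'I_q.+1 := inord (phin z).
Definition psi (y : 'I_q.+1) : 'I_q.+3 := inord (psin y).
Definition Eout (y : 'I_q.+1) : 'I_q.+3 := inord (Eon y).
Definition Eint (y : 'I_q.+1) : 'I_q.+3 := inord (Ein y).

Lemma m0_le : m0 <= q.
Proof. rewrite /m0; move/orP: Hij => [] /eqP; lia. Qed.

Lemma I0v : nat_of_ord I0 = i0. Proof. by rewrite /I0 inordK //; lia. Qed.
Lemma J0v : nat_of_ord J0 = j0. Proof. by rewrite /J0 inordK //; lia. Qed.
Lemma N0v : nat_of_ord N0 = q.+2. Proof. by []. Qed.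
Lemma Mov : nat_of_ord Mo = m0.+1. Proof. have := m0_le; move=> ?; by rewrite /Mo inordK //; lia. Qed.
Lemma Kv : nat_of_ord K = m0. Proof. have := m0_le; move=> ?; by rewrite /K inordK //; lia. Qed.
Lemma phiv z : nat_of_ord (phi z) = phin (nat_of_ord z).
Proof. have := m0_le; have := ltn_ord z; move=> ? ?; rewrite /phi inordK // /phin; ifs; lia. Qed.
Lemma psiv y : nat_of_ord (psi y) = psin (nat_of_ord y).
Proof. have := m0_le; have := ltn_ord y; move=> ? ?; rewrite /psi inordK // /psin; ifs; lia. Qed.
Lemma Eoutv y : nat_of_ord (Eout y) = Eon (nat_of_ord y).
Proof. have := m0_le; have := ltn_ord y; move=> ? ?; rewrite /Eout inordK // /Eon; ifs; lia. Qed.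
Lemma Eintv y : nat_of_ord (Eint y) = Ein (nat_of_ord y).
Proof. have := m0_le; have := ltn_ord y; move=> ? ?; rewrite /Eint inordK // /Ein; ifs; lia. Qed.

Lemma m0_cases : ((m0 == i0) && (j0 == m0.+1)) || ((m0 == j0) && (i0 == m0.+1)).
Proof. rewrite /m0; move/orP: Hij => [] /eqP; lia. Qed.

Ltac vals := rewrite -?val_eqE /= ?(I0v, J0v, N0v, Mov, Kv, phiv, psiv, Eoutv, Eintv).
Ltac crunch := have := m0_le; have := m0_cases; rewrite /phin /psin /Eon /Ein;
  ifs; lia.

Lemma phi_psi y : phi (psi y) = y.
Proof. apply: val_inj; have := ltn_ord y; vals; have := m0_le; have := m0_cases; rewrite /phin /psin /Eon /Ein; ifs; lia. Qed.
Lemma psi_phi z : z != Mo -> z != N0 -> psi (phi z) = z.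
Proof. move=> H1 H2; apply: val_inj; move: H1 H2; have := ltn_ord z; vals; crunch. Qed.
Lemma phi_Eout y : phi (Eout y) = y.
Proof. apply: val_inj; have := ltn_ord y; vals; crunch. Qed.
Lemma phi_Eint y : phi (Eint y) = y.
Proof. apply: val_inj; have := ltn_ord y; vals; crunch. Qed.
Lemma Eint_phi z : z != I0 -> z != N0 -> Eint (phi z) = z.
Proof. move=> H1 H2; apply: val_inj; move: H1 H2; have := ltn_ord z; vals; crunch. Qed.
Lemma Eout_phi z : z != J0 -> z != N0 -> Eout (phi z) = z.
Proof. move=> H1 H2; apply: val_inj; move: H1 H2; have := ltn_ord z; vals; crunch. Qed.
Lemma Eout_inj : injective Eout.
Proof. exact: can_inj phi_Eout. Qed.
Lemma Eint_inj : injective Eint.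
Proof. exact: can_inj phi_Eint. Qed.
Lemma Eout_N0 y : (Eout y == N0) = false.
Proof. apply/negbTE; have := ltn_ord y; vals; crunch. Qed.
Lemma Eout_J0 y : (Eout y == J0) = false.
Proof. apply/negbTE; have := ltn_ord y; vals; crunch. Qed.
Lemma Eint_I0 y : (Eint y == I0) = false.
Proof. apply/negbTE; have := ltn_ord y; vals; crunch. Qed.
Lemma Eint_N0 y : (Eint y == N0) = false.
Proof. apply/negbTE; have := ltn_ord y; vals; crunch. Qed.
Lemma psi_Mo y : (psi y == Mo) = false.
Proof. apply/negbTE; have := ltn_ord y; vals; crunch. Qed.
Lemma psi_N0 y : (psi y == N0) = false.
Proof. apply/negbTE; have := ltn_ord y; vals; crunch. Qed.
Lemma phiK z : (phi z == K) = [|| z == I0, z == J0 | z == N0].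
Proof. have := ltn_ord z; vals; crunch. Qed.
Lemma phiI0 : phi I0 = K. Proof. by apply/eqP; rewrite phiK eqxx. Qed.
Lemma phiJ0 : phi J0 = K. Proof. by apply/eqP; rewrite phiK eqxx orbT. Qed.
Lemma phiN0 : phi N0 = K. Proof. by apply/eqP; rewrite phiK eqxx !orbT. Qed.
Lemma I0J0 : (I0 == J0) = false. Proof. vals; crunch. Qed.
Lemma I0N0 : (I0 == N0) = false. Proof. vals; crunch. Qed.
Lemma J0N0 : (J0 == N0) = false. Proof. vals; crunch. Qed.
Lemma phi_inj z w : phi z = phi w -> phi z != K -> z = w.
Proof.
move=> E; rewrite phiK !negb_or => /and3P [h1 h2 h3].
have : phi w != K by rewrite -E phiK !negb_or h1 h2 h3.
rewrite phiK !negb_or => /and3P [h4 h5 h6].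
by rewrite -(Eint_phi h1 h3) -(Eint_phi h4 h6) E.
Qed.
Lemma phi_lt z w : phi z != K -> z != N0 -> w != N0 ->
  ((nat_of_ord w < nat_of_ord z) = (nat_of_ord (phi w) < nat_of_ord (phi z))) /\
  ((nat_of_ord z < nat_of_ord w) = (nat_of_ord (phi z) < nat_of_ord (phi w))).
Proof.
rewrite phiK !negb_or; move=> /and3P [h1 h2 h3] h4.
move: h1 h2 h3 h4; have := ltn_ord z; have := ltn_ord w; vals.
by split; apply/idP/idP; crunch.
Qed.
Lemma phi_mono z w : w != N0 -> nat_of_ord z <= nat_of_ord w ->
  nat_of_ord (phi z) <= nat_of_ord (phi w).
Proof. have := ltn_ord z; have := ltn_ord w; vals; crunch. Qed.
Lemma phi_le_rev z w : z != Mo -> z != N0 -> w != N0 ->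
  nat_of_ord (phi z) <= nat_of_ord (phi w) -> nat_of_ord z <= nat_of_ord w.
Proof. have := ltn_ord z; have := ltn_ord w; vals; crunch. Qed.
Lemma Mo_lt : exists2 w, nat_of_ord w < nat_of_ord Mo & (w == I0) || (w == J0).
Proof.
have := m0_cases; case/orP=> /andP [/eqP h1 /eqP h2].
  by exists I0; rewrite ?eqxx // I0v Mov h1.
by exists J0; rewrite ?eqxx ?orbT // J0v Mov h1.
Qed.
Lemma Mo_in : (Mo == I0) || (Mo == J0).
Proof. vals; crunch. Qed.
Definition liftf (s' : {perm 'I_q.+1}) (z : 'I_q.+3) : 'I_q.+3 :=
  if z == I0 then N0 else if z == N0 then J0 else Eout (s' (phi z)).

Lemma liftf_inj s' : injective (liftf s').
Proof.
move=> z w; rewrite /liftf.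
case: (eqVneq z I0) => [->|hzI]; case: (eqVneq w I0) => [->|hwI] //.
- case: (eqVneq w N0) => [_|hwN]; first by move/eqP; rewrite eq_sym J0N0.
  by move/eqP; rewrite eq_sym Eout_N0.
- case: (eqVneq z N0) => [_|hzN]; first by move/eqP; rewrite J0N0.
  by move/eqP; rewrite Eout_N0.
case: (eqVneq z N0) => [->|hzN]; case: (eqVneq w N0) => [->|hwN] //.
- by move/eqP; rewrite eq_sym Eout_J0.
- by move/eqP; rewrite Eout_J0.
move/Eout_inj/perm_inj => E.
by rewrite -(Eint_phi hzI hzN) -(Eint_phi hwI hwN) E.
Qed.

Definition Phi s' : {perm 'I_q.+3} := perm (@liftf_inj s').

Lemma Phi_I0 s' : Phi s' I0 = N0.
Proof. by rewrite permE /liftf eqxx. Qed.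
Lemma Phi_N0 s' : Phi s' N0 = J0.
Proof. by rewrite permE /liftf eqxx eq_sym I0N0. Qed.
Lemma Phi_other s' z : z != I0 -> z != N0 -> Phi s' z = Eout (s' (phi z)).
Proof. by move=> h1 h2; rewrite permE /liftf (negbTE h1) (negbTE h2). Qed.
Lemma Phi_J0 s' : Phi s' J0 = Eout (s' K).
Proof. by rewrite Phi_other ?phiJ0 // ?I0J0 ?J0N0 // eq_sym I0J0. Qed.
Lemma phi_Phi s' z : z != I0 -> z != N0 -> phi (Phi s' z) = s' (phi z).
Proof. by move=> h1 h2; rewrite Phi_other // phi_Eout. Qed.

Lemma Phi_inj : injective Phi.
Proof.
move=> s1 s2 E; apply/permP => y.
have := congr1 (fun s : {perm _} => s (Eint y)) E => /=.
by rewrite !Phi_other ?Eint_I0 ?Eint_N0 // phi_Eint => /Eout_inj.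
Qed.

Lemma Phi_surj (s : {perm 'I_q.+3}) : s I0 = N0 -> s N0 = J0 ->
  exists s', s = Phi s'.
Proof.
move=> hI hN.
have sJ z : z != N0 -> (s z == J0) = false.
  by move=> h; apply/negbTE; rewrite -hN (inj_eq perm_inj).
have sN z : z != I0 -> (s z == N0) = false.
  by move=> h; apply/negbTE; rewrite -hI (inj_eq perm_inj).
have inj : injective (fun y => phi (s (Eint y))).
  move=> y1 y2 E.
  have h1 := sJ _ (negbT (Eint_N0 y1)); have h2 := sN _ (negbT (Eint_I0 y1)).
  have h3 := sJ _ (negbT (Eint_N0 y2)); have h4 := sN _ (negbT (Eint_I0 y2)).
  have := Eout_phi (negbT h1) (negbT h2); rewrite E Eout_phi ?h3 ?h4 //.
  by move/perm_inj/Eint_inj.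
exists (perm inj); apply/permP => z.
case: (eqVneq z I0) => [->|hzI]; first by rewrite Phi_I0.
case: (eqVneq z N0) => [->|hzN]; first by rewrite Phi_N0.
rewrite Phi_other // permE Eint_phi // Eout_phi //.
  by rewrite sJ.
by rewrite sN.
Qed.
Section Conn.
Variable s' : {perm 'I_q.+1}.
Local Notation s := (Phi s').

Lemma step_fwd z : fconnect s' (phi z) (phi (s z)).
Proof.
case: (eqVneq z I0) => [->|hzI]; first by rewrite Phi_I0 phiI0 phiN0 connect0.
case: (eqVneq z N0) => [->|hzN]; first by rewrite Phi_N0 phiJ0 phiN0 connect0.
by rewrite phi_Phi // fconnect1.
Qed.

Lemma conn_fwd x z : fconnect s x z -> fconnect s' (phi x) (phi z).
Proof.
move/iter_findex <-; elim: (findex _ _ _) => [|m IH] /=; first exact: connect0.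
exact: connect_trans IH (step_fwd _).
Qed.

Lemma cIN : fconnect s I0 N0.
Proof. by have := fconnect1 s I0; rewrite Phi_I0. Qed.
Lemma cNJ : fconnect s N0 J0.
Proof. by have := fconnect1 s N0; rewrite Phi_N0. Qed.
Lemma cIJ : fconnect s I0 J0.
Proof. exact: connect_trans cIN cNJ. Qed.

Lemma csym a b : fconnect s a b = fconnect s b a.
Proof. exact: (@fconnect_sym _ (fun_of_perm s) (@perm_inj _ s)). Qed.

Lemma trip a b : [|| a == I0, a == J0 | a == N0] -> [|| b == I0, b == J0 | b == N0] ->
  fconnect s a b.
Proof.
have hI c : [|| c == I0, c == J0 | c == N0] -> fconnect s I0 c.
  by case/or3P => /eqP ->; rewrite ?connect0 ?cIJ ?cIN.
move=> /hI ha /hI hb; rewrite csym in ha; exact: connect_trans ha hb.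
Qed.

Lemma step_bwd w : exists2 w2, fconnect s w w2 & phi w2 = s' (phi w).
Proof.
case: (eqVneq w I0) => [->|hwI].
  exists (s J0); last by rewrite phiI0 phi_Phi ?phiJ0 // ?I0J0 ?J0N0 // eq_sym I0J0.
  exact: connect_trans cIJ (fconnect1 _ _).
case: (eqVneq w N0) => [->|hwN].
  exists (s J0); last by rewrite phiN0 phi_Phi ?phiJ0 // ?I0J0 ?J0N0 // eq_sym I0J0.
  exact: connect_trans cNJ (fconnect1 _ _).
by exists (s w); rewrite ?fconnect1 ?phi_Phi.
Qed.

Lemma conn_bwd x z : z != N0 -> fconnect s' (phi x) (phi z) -> fconnect s x z.
Proof.
move=> hz /iter_findex.
have : forall m, exists2 w, fconnect s x w & phi w = iter m s' (phi x).
  elim=> [|m [w h1 h2]]; first by exists x; rewrite ?connect0.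
  have [w2 h3 h4] := step_bwd w.
  by exists w2; [exact: connect_trans h1 h3 | rewrite h4 h2].
move=> /(_ (findex s' (phi x) (phi z))) [w h1 Hw] E; rewrite -Hw in E.
case: (eqVneq (phi z) K) => hK.
  apply: connect_trans h1 (trip _ _).
    by rewrite -phiK E hK.
  by rewrite -phiK hK.
by rewrite (phi_inj (esym E)).
Qed.

Lemma conn_eq x z : x != N0 -> z != N0 -> fconnect s x z = fconnect s' (phi x) (phi z).
Proof. by move=> _ hz; apply/idP/idP; [exact: conn_fwd | exact: conn_bwd]. Qed.

End Conn.
Lemma Eint_J0 y : (Eint y == J0) = (y == K).
Proof. have := ltn_ord y; vals; crunch. Qed.

Lemma cardG (A : {pred 'I_q.+3}) (B : {pred 'I_q.+1}) :
  (forall z, z != I0 -> z != J0 -> z != N0 -> (z \in A) = (phi z \in B)) ->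
  #|A| + (K \in B) = #|B| + (I0 \in A) + (J0 \in A) + (N0 \in A).
Proof.
move=> H.
rewrite (cardD1 I0 A) (cardD1 J0 [predD1 A & I0]).
rewrite (cardD1 N0 [predD1 [predD1 A & I0] & J0]) (cardD1 K B) !inE.
rewrite eq_sym I0J0 eq_sym J0N0 eq_sym I0N0 /=.
have -> : #|[predD1 [predD1 [predD1 A & I0] & J0] & N0]| = #|[predD1 B & K]|.
  rewrite -(card_imset _ Eint_inj); apply: eq_card => z; rewrite !inE.
  apply/idP/imsetP.
    case/and4P => h1 h2 h3 h4; exists (phi z); last by rewrite Eint_phi.
    by rewrite !inE phiK !negb_or h1 h2 h3 -H.
  move=> [y]; rewrite !inE => /andP [hy1 hy2] ->.
  by rewrite Eint_N0 Eint_J0 hy1 Eint_I0 H ?phi_Eint // ?Eint_I0 ?Eint_N0 ?Eint_J0.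
set c := #|[predD1 B & K]|; by case: (I0 \in A); case: (J0 \in A); case: (N0 \in A); case: (K \in B); rewrite /=; lia.
Qed.

Section Conn2.
Variable s' : {perm 'I_q.+1}.
Local Notation s := (Phi s').

Lemma rep_eq x : cycle_rep s x = [&& x != Mo, x != N0 & cycle_rep s' (phi x)].
Proof.
apply/idP/idP.
- move/forallP => H.
  have hN : x != N0.
    apply/eqP => hx; have := H I0; rewrite hx csym cIN /= I0v; lia.
  have hM : x != Mo.
    apply/eqP => hx; have [w hw win] := Mo_lt.
    have := H w; rewrite hx trip /=; first lia.
      by case/orP: Mo_in => ->; rewrite ?orbT.
    by case/orP: win => ->; rewrite ?orbT.
  rewrite hM hN /=; apply/forallP => y; apply/implyP => hy.
  have := H (psi y); rewrite conn_eq ?psi_N0 // phi_psi hy /= => hxy.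
  by have := phi_mono (negbT (psi_N0 y)) hxy; rewrite phi_psi.
- case/and3P => hM hN /forallP H; apply/forallP => z; apply/implyP => hz.
  case: (eqVneq z N0) => [->|hzN]; first by have := ltn_ord x; rewrite /=; lia.
  apply: (phi_le_rev hM hN hzN).
  by have := H (phi z); rewrite -(conn_eq s' hN hzN) hz.
Qed.
Lemma Phi_eqN0 z : (s z == N0) = (z == I0).
Proof. by rewrite -(Phi_I0 s') (inj_eq perm_inj). Qed.

Lemma trip_conn x : x != N0 ->
  [/\ fconnect s x I0 = fconnect s' (phi x) K, fconnect s x J0 = fconnect s' (phi x) K
    & fconnect s x N0 = fconnect s' (phi x) K].
Proof.
move=> hx; rewrite (conn_eq s' hx (negbT I0N0)) (conn_eq s' hx (negbT J0N0)) phiI0 phiJ0.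
split => //.
apply/idP/idP => h.
  rewrite -phiI0 -(conn_eq s' hx (negbT I0N0)).
  by apply: (connect_trans h); rewrite csym cIN.
apply: (connect_trans _ (cIN s')).
by rewrite (conn_eq s' hx (negbT I0N0)) phiI0.
Qed.

Lemma sz_rel x : x != N0 ->
  #|fconnect s x| = #|fconnect s' (phi x)| + 2 * fconnect s' (phi x) K.
Proof.
move=> hx.
have := @cardG (fconnect s x) (fconnect s' (phi x)).
rewrite !memP; have [-> -> ->] := trip_conn hx.
move=> /(_ _) H.
have {}H : #|fconnect s x| + fconnect s' (phi x) K =
  #|fconnect s' (phi x)| + fconnect s' (phi x) K + fconnect s' (phi x) K +
  fconnect s' (phi x) K.
  by apply: H => z h1 h2 h3; rewrite !memP conn_eq.
by move: H; case: (fconnect s' (phi x) K) => /=; lia.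
Qed.
Lemma Eout_K : Eout K = I0.
Proof. apply: val_inj; vals; crunch. Qed.
Lemma Eout_lt y : y != K ->
  ((nat_of_ord (Eout y) < j0) = (nat_of_ord y < m0)) /\
  ((j0 < nat_of_ord (Eout y)) = (m0 < nat_of_ord y)).
Proof. have := ltn_ord y; vals => ? ?; split; apply/idP/idP; crunch. Qed.

Lemma fix_conn y z : s' y = y -> fconnect s' y z -> z = y.
Proof. by move=> hy /iter_findex <-; rewrite iter_fix. Qed.

Lemma W_rel y : cweight_cycle (cycle_of s (psi y)) =
  cweight_cycle (cycle_of s' y) + fconnect s' y K.
Proof.
rewrite /cweight_cycle !cdes_cycle !casc_cycle.
set x := psi y; have hx : x != N0 := negbT (psi_N0 y).
have hy : phi x = y := phi_psi y.
have Hd := @cardG [pred z | fconnect s x z && (nat_of_ord (s z) < nat_of_ord z)]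
  [pred z | fconnect s' y z && (nat_of_ord (s' z) < nat_of_ord z)].
have Ha := @cardG [pred z | fconnect s x z && (nat_of_ord z < nat_of_ord (s z))]
  [pred z | fconnect s' y z && (nat_of_ord z < nat_of_ord (s' z))].
have hz z : z != I0 -> z != J0 -> z != N0 ->
  (fconnect s x z = fconnect s' y (phi z)) /\
  ((nat_of_ord (s z) < nat_of_ord z) = (nat_of_ord (s' (phi z)) < nat_of_ord (phi z))) /\
  ((nat_of_ord z < nat_of_ord (s z)) = (nat_of_ord (phi z) < nat_of_ord (s' (phi z)))).
  move=> h1 h2 h3; rewrite conn_eq // hy -phi_Phi //.
  have hK : phi z != K by rewrite phiK !negb_or h1 h2 h3.
  have hs : s z != N0 by rewrite Phi_eqN0.
  by have [-> ->] := phi_lt hK h3 hs.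
have {}Hd := Hd (fun z h1 h2 h3 => ltac:(by rewrite !inE; have [-> [-> _]] := hz z h1 h2 h3)).
have {}Ha := Ha (fun z h1 h2 h3 => ltac:(by rewrite !inE; have [-> [_ ->]] := hz z h1 h2 h3)).
move: Hd Ha; rewrite !inE; have [-> -> ->] := trip_conn hx; rewrite hy.
rewrite Phi_I0 Phi_N0 Phi_J0 /= ?I0v ?J0v.
case hk: (fconnect s' y K) => /=; last first.
  by move=> H1 H2; rewrite !addn0 in H1 H2; rewrite H1 H2 addn0.
case: (eqVneq (s' K) K) => hsk.
  have cK z : fconnect s' y z -> z = K.
    move=> h1; have hkz : fconnect s' K z.
      by apply: (connect_trans _ h1); rewrite (fconnect_sym (@perm_inj _ s')) hk.
    exact: fix_conn hsk hkz.
  have -> : #|[pred z | fconnect s' y z & s' z < z]| = 0.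
    apply: eq_card0 => z; rewrite !inE; apply/negP => /andP [/cK -> ].
    by rewrite hsk ltnn.
  have -> : #|[pred z | fconnect s' y z & z < s' z]| = 0.
    apply: eq_card0 => z; rewrite !inE; apply/negP => /andP [/cK -> ].
    by rewrite hsk ltnn.
  rewrite hsk Eout_K I0v ltnn.
  have := I0J0; rewrite -val_eqE /= I0v J0v => hne.
  set a := #|_|; set b := #|_|.
  move=> Hd Ha; lia.
have [-> ->] := Eout_lt hsk; rewrite Kv.
set a := #|_|; set b := #|_|; set c := #|_|; set d := #|_|.
move=> Hd Ha; lia.
Qed.
Lemma rep_unique : #|[pred y | cycle_rep s' y && fconnect s' y K]| = 1.
Proof.
have fsym := fconnect_sym (@perm_inj _ s').
case: (arg_minnP (fun z : 'I_q.+1 => nat_of_ord z) (connect0 (frel s') K)) => r hr hmin.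
apply: (@eq_card1 _ r) => y; rewrite !inE.
apply/idP/eqP.
- case/andP => /forallP hy hyK.
  have h1 := hy r; rewrite (connect_trans hyK hr) /= in h1.
  have h2 := hmin y; rewrite fsym hyK in h2.
  by apply: val_inj => /=; have := h2 isT; move: h1; lia.
- move=> ->; rewrite fsym hr andbT; apply/forallP => z; apply/implyP => hz.
  exact: hmin (connect_trans hr hz).
Qed.

Lemma cweight_Phi : cweight s = (cweight s').+1.
Proof.
rewrite /cweight (reindex_onto psi phi); last first.
  by move=> x; rewrite rep_eq => /and3P [h1 h2 _]; exact: psi_phi.
rewrite (eq_bigl (fun y => cycle_rep s' y)); last first.
  by move=> y; rewrite phi_psi eqxx andbT rep_eq psi_Mo psi_N0 phi_psi.
rewrite (eq_bigr (fun y => cweight_cycle (cycle_of s' y) + fconnect s' y K)); last first.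
  by move=> y _; exact: W_rel.
rewrite big_split /=.
suff -> : \sum_(y | cycle_rep s' y) (fconnect s' y K : nat) = 1 by rewrite addn1.
rewrite (eq_bigr (fun y => if fconnect s' y K then 1 else 0)); last first.
  by move=> y _; case: (fconnect s' y K).
rewrite -big_mkcondr sum1dep_card -rep_unique.
by apply: eq_card => y; rewrite !inE.
Qed.

Lemma odd_Phi : odd_order s = odd_order s'.
Proof.
apply/forallP/forallP => H y.
- have := H (psi y); rewrite !size_cycle sz_rel ?psi_N0 // phi_psi.
  by rewrite oddD oddM /= addbF.
have gen x : x != N0 -> odd (size (cycle_of s x)).
  move=> hx; rewrite size_cycle sz_rel // oddD oddM /= addbF -size_cycle.
  exact: H.
case: (eqVneq y N0) => [->|hy]; last exact: gen.
rewrite size_cycle.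
have -> : #|fconnect s N0| = #|fconnect s I0|.
  apply: eq_card => z; rewrite !memP; apply/idP/idP => h.
    exact: connect_trans (cIN s') h.
  by apply: connect_trans h; rewrite csym cIN.
by rewrite -size_cycle; apply: gen; rewrite I0N0.
Qed.
End Conn2.
Lemma intS (c : nat) (d : int) : (Posz c.+1 == d) = (Posz c == (d - 1)%R).
Proof. by apply/eqP/eqP; lia. Qed.

Lemma cyc_eq (s : {perm 'I_q.+3}) :
  cyc_factor s i0.+1 j0.+1 = (s I0 == N0) && (s N0 == J0).
Proof.
apply/existsP/andP.
- case=> x /existsP [y /and4P [h1 h2 h3 h4]].
  have ex : x = I0 by apply: val_inj; rewrite /= I0v; move/eqP: h1 => [].
  have ey : y = N0 by apply: val_inj; move/eqP: h2 => [] /=.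
  subst; split => //; apply/eqP/val_inj; rewrite /= J0v; by move/eqP: h4 => [].
- case=> /eqP h1 /eqP h2; exists I0; apply/existsP; exists N0.
  by rewrite h1 h2 /= I0v J0v !eqxx.
Qed.

Lemma p_lift (d : int) :
  p_ij q.+3 d i0.+1 j0.+1 = p q.+1 (d - 1)%R.
Proof.
rewrite /p_ij /p -(card_imset _ Phi_inj); apply: eq_card => s; rewrite inE cyc_eq.
apply/idP/imsetP.
- case/and3P => ho hw /andP [/eqP h1 /eqP h2].
  have [s' E] := Phi_surj h1 h2; subst s.
  by exists s' => //; rewrite inE -odd_Phi ho /= -intS -cweight_Phi.
- move=> [s']; rewrite inE => /andP [ho hw] ->.
  by rewrite odd_Phi ho cweight_Phi Phi_I0 Phi_N0 !eqxx intS hw.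
Qed.
End Lift.

Definition cmp (x y : nat) := (x < y, y < x).
Definition csig (w : seq nat) := map (fun p => cmp p.1 p.2) (adj_pairs w).
Definition hs (S : seq (bool * bool)) : int := (Posz (count fst S) - Posz (count snd S))%R.

Lemma csig_cons2 x y t : csig (x :: y :: t) = cmp x y :: csig (y :: t).
Proof. by []. Qed.
Lemma csig1 x : csig [:: x] = [::]. Proof. by []. Qed.
Lemma csig0 : csig [::] = [::]. Proof. by []. Qed.

Lemma des_csig w : des w = count snd (csig w).
Proof. by rewrite /des /csig count_map. Qed.
Lemma height_csig w : height w = hs (csig w).
Proof. by rewrite /height /hs /asc /des /csig !count_map. Qed.

Lemma hs_cat A B : hs (A ++ B) = (hs A + hs B)%R.
Proof. rewrite /hs !count_cat !PoszD; lia. Qed.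

Lemma adj_take k w : adj_pairs (take k w) = take k.-1 (adj_pairs w).
Proof.
elim: w k => [|x w IH] k; first by case: k.
case: k => [|k]; first by rewrite /= take0.
case: w IH => [|y w] IH; first by case: k.
case: k => [|k]; first by [].  
have -> : take k.+2 [:: x, y & w] = x :: take k.+1 (y :: w) by [].
have -> : adj_pairs (x :: take k.+1 (y :: w)) = (x, y) :: adj_pairs (take k.+1 (y :: w)) by [].
by rewrite IH.
Qed.

Lemma csig_take k w : csig (take k w) = take k.-1 (csig w).
Proof. by rewrite /csig adj_take map_take. Qed.

Lemma size_csig w : size (csig w) = (size w).-1.
Proof. case: w => [|x w] //; rewrite /csig size_map /adj_pairs size_zip /=; lia. Qed.

Lemma ballotE w : ballot w <-> (forall k, (0 <= hs (take k (csig w)))%R).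
Proof.
split.
- move=> /forallP H k; case: (ltnP k (size w)) => hk.
    have := H (Ordinal (hk : k.+1 < (size w).+1)).
    by rewrite /= height_csig csig_take.
  have := H (Ordinal (ltnSn (size w))).
  rewrite /= take_size height_csig take_oversize // size_csig; lia.
- move=> H; apply/forallP => k; by rewrite height_csig csig_take.
Qed.

Definition uv := [:: (true, false); (false, true)].

Lemma take_cat_ge (T : Type) k (X Y : seq T) :
  size X <= k -> take k (X ++ Y) = X ++ take (k - size X) Y.
Proof. by move=> h; rewrite take_cat ltnNge h. Qed.

Lemma hs_uv Y : hs (uv ++ Y) = hs Y.
Proof. rewrite hs_cat /hs /=; lia. Qed.

Lemma sb_ins X Y : (forall k, (0 <= hs (take k (X ++ uv ++ Y)))%R) <->
  (forall k, (0 <= hs (take k (X ++ Y)))%R).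
Proof.
split => H k.
- case: (ltnP k (size X)) => hk.
    by have := H k; rewrite !take_cat hk.
  have := H k.+2; rewrite (take_cat_ge _ (leqW (leqW hk))).
  rewrite (_ : k.+2 - size X = (k - size X).+2); last by lia.
  have -> : take (k - size X).+2 (uv ++ Y) = uv ++ take (k - size X) Y by [].
  by rewrite hs_cat hs_uv (take_cat_ge _ hk) hs_cat.
- case: (ltnP k (size X)) => hk.
    by have := H k; rewrite !take_cat hk.
  rewrite take_cat_ge //.
  have := H (size X); rewrite take_cat_ge // subnn take0 cats0 => hX.
  case: (k - size X) => [|[|r]].
  - by rewrite take0 cats0.
  - by rewrite hs_cat /hs /=; move: hX; rewrite /hs; lia.
  have := H (size X + r); rewrite take_cat_ge ?leq_addr // addKn => hr.
  have -> : take r.+2 (uv ++ Y) = uv ++ take r Y by [].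
  by rewrite hs_cat hs_uv -hs_cat.
Qed.

Lemma csig_cat a x c : csig (a ++ x :: c) = csig (rcons a x) ++ csig (x :: c).
Proof.
elim: a => [|z a IH] //.
case: a IH => [|z' a] IH //.
by rewrite cat_cons rcons_cons /= [_ ++ _]/= !csig_cons2 IH -cat_cons -csig_cons2.
Qed.

Lemma csig_rcons_eq a x y : (forall z, z \in a -> cmp z x = cmp z y) ->
  csig (rcons a x) = csig (rcons a y).
Proof.
elim: a => [|z a IH] // H.
case: a IH H => [|z' a] IH H.
  by rewrite /= !csig_cons2 H ?mem_head.
rewrite !rcons_cons !csig_cons2 -!rcons_cons IH // => t ht.
by apply: H; rewrite inE ht orbT.
Qed.

Lemma csig_head_eq x y c : (forall z, z \in c -> cmp x z = cmp y z) ->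
  csig (x :: c) = csig (y :: c).
Proof. by case: c => [|z c] // H; rewrite !csig_cons2 H ?mem_head. Qed.

Lemma csig_map f s : {in s &, forall x y, (f x < f y) = (x < y)} ->
  csig (map f s) = csig s.
Proof.
elim: s => [|x s IH] // H.
case: s IH H => [|y s] IH H //.
rewrite map_cons map_cons csig_cons2 -map_cons IH; last first.
  by move=> a b ha hb; apply: H; rewrite inE ?ha ?hb orbT.
by rewrite csig_cons2 /cmp !H ?inE ?eqxx ?orbT.
Qed.

Lemma uniq_mid (a c : seq nat) x : uniq (a ++ x :: c) = (x \notin a ++ c) && uniq (a ++ c).
Proof. by rewrite -cat1s uniq_catCA cat1s cons_uniq. Qed.

Lemma count_bij (s1 s2 : seq (seq nat)) (P1 P2 : pred (seq nat)) f g :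
  uniq s1 -> uniq s2 ->
  (forall w, w \in s1 -> P1 w -> [/\ f w \in s2, P2 (f w) & g (f w) = w]) ->
  (forall u, u \in s2 -> P2 u -> [/\ g u \in s1, P1 (g u) & f (g u) = u]) ->
  count P1 s1 = count P2 s2.
Proof.
move=> u1 u2 H1 H2; rewrite -!size_filter; apply/eqP; rewrite eqn_leq; apply/andP; split.
- rewrite -(size_map f); apply: uniq_leq_size.
    rewrite map_inj_in_uniq ?filter_uniq // => x y.
    rewrite !mem_filter => /andP [px xs] /andP [py ys] E.
    by have [_ _ <-] := H1 x xs px; have [_ _ <-] := H1 y ys py; rewrite E.
  move=> z /mapP [x]; rewrite mem_filter => /andP [px xs] ->.
  by have [h1 h2 _] := H1 x xs px; rewrite mem_filter h1 h2.
- rewrite -(size_map g); apply: uniq_leq_size.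
    rewrite map_inj_in_uniq ?filter_uniq // => x y.
    rewrite !mem_filter => /andP [px xs] /andP [py ys] E.
    by have [_ _ <-] := H2 x xs px; have [_ _ <-] := H2 y ys py; rewrite E.
  move=> z /mapP [x]; rewrite mem_filter => /andP [px xs] ->.
  by have [h1 h2 _] := H2 x xs px; rewrite mem_filter h1 h2.
Qed.

Lemma perm_iotaP k x : perm_eq x (iota 1 k) =
  [&& uniq x, size x == k & all (fun v => 0 < v <= k) x].
Proof.
apply/idP/idP.
- move=> hp; rewrite (perm_uniq hp) iota_uniq (perm_size hp) size_iota eqxx.
  by rewrite (perm_all _ hp); apply/allP => v; rewrite mem_iota; lia.
- case/and3P => ux /eqP sx ax; apply: uniq_perm => //; first exact: iota_uniq.
  have sub : {subset x <= iota 1 k} by move=> v /(allP ax); rewrite mem_iota; lia.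
  have sz : size (iota 1 k) <= size x by rewrite size_iota sx.
  by have [_ h] := uniq_min_size ux sub sz.
Qed.


Section Words.
Variables (q i j : nat).
Hypothesis Hi : 0 < i <= q.+2.
Hypothesis Hj : 0 < j <= q.+2.
Hypothesis Hij : (i == j.+1) || (j == i.+1).
Let m := minn i j.

Lemma m_cases : ((m == i) && (j == m.+1)) || ((m == j) && (i == m.+1)).
Proof. rewrite /m; move/orP: Hij => [] /eqP; lia. Qed.
Lemma m_bnd : 0 < m <= q.+1.
Proof. have := m_cases; lia. Qed.

Definition rl x := if x <= m then x else x.-1.
Definition exv y := if y <= m then y else y.+1.

Ltac crunch := have := m_cases; have := m_bnd; rewrite /rl /exv; ifs; lia.

Lemma rl_ex y : rl (exv y) = y. Proof. crunch. Qed.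
Lemma ex_rl x : x != m.+1 -> exv (rl x) = x. Proof. crunch. Qed.
Lemma rl_m : rl m = m. Proof. crunch. Qed.
Lemma rl_lt x y : x != m.+1 -> y != m.+1 -> (rl x < rl y) = (x < y).
Proof. move=> ? ?; apply/idP/idP; crunch. Qed.
Lemma ex_lt x y : (exv x < exv y) = (x < y).
Proof. apply/idP/idP; crunch. Qed.
Lemma cmp_i z : z != i -> z != j -> cmp z i = cmp z m.
Proof. move=> ? ?; rewrite /cmp; congr pair; apply/idP/idP; crunch. Qed.
Lemma cmp_j z : z != i -> z != j -> cmp j z = cmp m z.
Proof. move=> ? ?; rewrite /cmp; congr pair; apply/idP/idP; crunch. Qed.

Definition fw (w : seq nat) : seq nat :=
  map rl (take (index i w) w ++ m :: drop (index i w).+3 w).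
Definition gw (u : seq nat) : seq nat :=
  map exv (take (index m u) u) ++ [:: i; q.+3; j] ++ map exv (drop (index m u).+1 u).

Lemma rl_inj x y : x != m.+1 -> y != m.+1 -> rl x = rl y -> x = y.
Proof. move=> hx hy E; have := rl_lt hx hy; have := rl_lt hy hx; rewrite E ltnn; lia. Qed.

Lemma fw_spec w : perm_eq w (iota 1 q.+3) -> infix [:: i; q.+3; j] w ->
  [/\ perm_eq (fw w) (iota 1 q.+1), gw (fw w) = w,
      des w = (des (fw w)).+1 & ballot w = ballot (fw w)].
Proof.
move=> hp /infixP [a [c E]]; subst w.
have E3 : [:: i; q.+3; j] ++ c = i :: q.+3 :: j :: c by [].
rewrite E3 in hp *.
have := hp; rewrite perm_iotaP => /and3P [uw /eqP sw aw].
move: (uw); rewrite uniq_mid => /andP [ni u1]; move: u1; rewrite uniq_mid => /andP [nn u2].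
move: u2; rewrite uniq_mid => /andP [nj uac].
have hz z : z \in a ++ c -> [/\ z != i, z != j, z != q.+3 & 0 < z <= q.+3].
  move=> hz; split.
  - by apply/eqP => ez; move: ni; rewrite -ez; move: hz; rewrite !mem_cat !inE; case/orP => ->; rewrite ?orbT.
  - by apply/eqP => ez; move: nj; rewrite -ez hz.
  - by apply/eqP => ez; move: nn; rewrite -ez; move: hz; rewrite !mem_cat !inE; case/orP => ->; rewrite ?orbT.
  apply: (allP aw); move: hz; rewrite !mem_cat !inE; case/orP => ->; rewrite ?orbT //.
have ia : i \notin a by apply: contra ni; rewrite mem_cat => ->.
have fwE : fw (a ++ i :: q.+3 :: j :: c) = map rl (a ++ m :: c).
  rewrite /fw index_cat (negbTE ia) /= eqxx addn0 take_size_cat //.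
  rewrite drop_cat ifF; last by lia.
  rewrite (_ : (size a).+3 - size a = 3); last by lia.
  by rewrite /= drop0.
have mi : m \notin a ++ c.
  apply/negP => /hz [h1 h2 _ _]; move: h1 h2; have := m_cases; lia.
have mm : {in a ++ m :: c, forall z, z != m.+1}.
  move=> z; rewrite mem_cat inE orbCA => /orP [/eqP ->|]; first lia.
  by rewrite -mem_cat => /hz [h1 h2 _ _]; move: h1 h2; have := m_cases; lia.
have sig1 : csig (a ++ i :: q.+3 :: j :: c) = csig (rcons a m) ++ uv ++ csig (m :: c).
  rewrite csig_cat (@csig_rcons_eq _ _ m); last first.
    by move=> z za; have := hz z; rewrite mem_cat za => /(_ isT) [h1 h2 _ _]; exact: cmp_i.
  rewrite !csig_cons2 (@csig_head_eq j m); last first.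
    by move=> z zc; have := hz z; rewrite mem_cat zc orbT => /(_ isT) [h1 h2 _ _]; exact: cmp_j.
  have -> : cmp i q.+3 = (true, false) by rewrite /cmp; congr pair; lia.
  by have -> : cmp q.+3 j = (false, true) by rewrite /cmp; congr pair; lia.
have sig2 : csig (fw (a ++ i :: q.+3 :: j :: c)) = csig (rcons a m) ++ csig (m :: c).
  by rewrite fwE csig_map ?csig_cat // => x y hx hy; apply: rl_lt; apply: mm.
split.
- rewrite fwE perm_iotaP; apply/and3P; split.
  + rewrite map_inj_in_uniq; last by move=> x y hx hy; apply: rl_inj; apply: mm.
    by rewrite uniq_mid mi uac.
  + rewrite size_map size_cat /=; move: sw; rewrite size_cat /=; lia.
  apply/allP => v /mapP [x hx ->].
  have := mm x hx; move: hx; rewrite mem_cat inE orbCA => /orP [/eqP ->|].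
    by rewrite rl_m; have := m_bnd; lia.
  rewrite -mem_cat => /hz [h1 h2 h3 h4]; move: h1 h2 h3 h4.
  by rewrite /rl; have := m_cases; have := m_bnd; ifs; lia.
- rewrite fwE /gw map_cat /= rl_m.
  have hm : m \notin map rl a.
    apply/mapP => [[x xa]]; have := mm x; rewrite mem_cat xa => /(_ isT).
    have := hz x; rewrite mem_cat xa => /(_ isT) [h1 h2 _ _]; move: h1 h2.
    by rewrite /rl; have := m_cases; ifs; lia.
  rewrite index_cat (negbTE hm) /= eqxx addn0 take_size_cat ?size_map //.
  rewrite drop_cat size_map ltnNge leqnSn /= subSnn /=.
  have ea : map exv (map rl a) = a.
    rewrite -map_comp -[RHS]map_id; apply/eq_in_map => x hx /=; apply: ex_rl; apply: mm.
    by rewrite mem_cat hx.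
  have ec : map exv (map rl c) = c.
    rewrite -map_comp -[RHS]map_id; apply/eq_in_map => x hx /=; apply: ex_rl; apply: mm.
    by rewrite mem_cat inE hx !orbT.
  by rewrite ea drop0 ec.
- by rewrite !des_csig sig1 sig2 !count_cat /= addnS.
- apply/idP/idP => /ballotE H; apply/ballotE.
    by rewrite sig2; apply/sb_ins; rewrite -sig1.
  by rewrite sig1; apply/sb_ins; rewrite -sig2.
Qed.


Lemma gw_spec u : perm_eq u (iota 1 q.+1) ->
  [/\ perm_eq (gw u) (iota 1 q.+3), infix [:: i; q.+3; j] (gw u) & fw (gw u) = u].
Proof.
move=> hp.
have mu : m \in u by rewrite (perm_mem hp) mem_iota; have := m_bnd; lia.
have [a [c E]] : exists a c, u = a ++ m :: c.
  exists (take (index m u) u), (drop (index m u).+1 u).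
  by rewrite -{1}(cat_take_drop (index m u) u) (drop_nth m) ?index_mem // nth_index.
subst u.
have := hp; rewrite perm_iotaP => /and3P [uw /eqP sw aw].
move: (uw); rewrite uniq_mid => /andP [mi uac].
have ma : m \notin a by apply: contra mi; rewrite mem_cat => ->.
have gwE : gw (a ++ m :: c) = map exv a ++ [:: i; q.+3; j] ++ map exv c.
  rewrite /gw index_cat (negbTE ma) /= eqxx addn0 take_size_cat //.
  rewrite drop_cat ifF; last by lia.
  by rewrite subSnn /= drop0.
have hz z : z \in a ++ c -> z != m /\ 0 < z <= q.+1.
  move=> hz; split; first by apply/eqP => ez; move: mi; rewrite -ez hz.
  by apply: (allP aw); move: hz; rewrite !mem_cat inE; case/orP => ->; rewrite ?orbT.
have exi z : z \in a ++ c -> [/\ exv z != i, exv z != j, exv z != q.+3 & 0 < exv z <= q.+2].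
  move=> /hz [h1 h2]; move: h1 h2; rewrite /exv; have := m_cases; ifs; move=> h0 h1 h2; split; lia.
rewrite gwE; split.
- rewrite perm_iotaP; apply/and3P; split.
  + rewrite uniq_catCA cat_uniq -map_cat; apply/and3P; split.
    * rewrite /= !inE; have := m_cases; lia.
    * apply/hasPn => z /mapP [x hx ->]; have [h1 h2 h3 _] := exi x hx.
      rewrite !inE; lia.
    rewrite map_inj_in_uniq // => x y _ _ E.
    have := ex_lt x y; have := ex_lt y x; rewrite E ltnn; lia.
  + rewrite !size_cat !size_map /=; move: sw; rewrite size_cat /=; lia.
  apply/allP => v; rewrite mem_cat => /orP [/mapP [x hx ->]|].
    by have := exi x; rewrite mem_cat hx => /(_ isT) [_ _ _ h]; lia.
  rewrite mem_cat => /orP [|/mapP [x hx ->]].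
    by rewrite !inE; have := m_bnd; have := m_cases; lia.
  by have := exi x; rewrite mem_cat hx orbT => /(_ isT) [_ _ _ h]; lia.
- by apply/infixP; exists (map exv a), (map exv c).
have ia : i \notin map exv a.
  apply/mapP => [[x hx E]]; have := exi x; rewrite mem_cat hx => /(_ isT) [h1 _ _ _].
  by move: h1; rewrite -E eqxx.
rewrite /fw index_cat (negbTE ia) /= eqxx addn0 take_size_cat ?size_map //.
rewrite drop_cat size_map ifF; last by lia.
rewrite (_ : (size a).+3 - size a = 3); last by lia.
rewrite /= drop0 map_cat /= rl_m -!map_comp.
by rewrite !(eq_map rl_ex) !map_id.
Qed.

End Words.

Lemma intS' (c : nat) (d : int) : (Posz c.+1 == d) = (Posz c == (d - 1)%R).
Proof. by apply/eqP/eqP; lia. Qed.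

Lemma b_lift q i j d : 0 < i <= q.+2 -> 0 < j <= q.+2 -> (i == j.+1) || (j == i.+1) ->
  b_ij q.+3 d i j = b q.+1 (d - 1)%R.
Proof.
move=> Hi Hj Hij.
rewrite /b_ij /b /perms_of.
apply: (@count_bij _ _ _ _ (fw i j) (gw q i j)); rewrite ?permutations_uniq //.
- move=> w; rewrite mem_permutations => hp /and3P [hb hd hinf].
  have [h1 h2 h3 h4] := fw_spec Hi Hj Hij hp hinf.
  split; rewrite ?mem_permutations //.
  by rewrite -h4 hb /= -intS' -h3.
- move=> u; rewrite mem_permutations => hp /andP [hb hd].
  have [h1 h2 h3] := gw_spec Hi Hj Hij hp.
  have [_ _ h5 h6] := fw_spec Hi Hj Hij h1 h2.
  split; rewrite ?mem_permutations //.
  by rewrite h6 h3 hb h5 h3 intS' hd h2.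
Qed.

Theorem lemma2p1 (n : nat) (d : int) (i j : nat) :
  3 <= n -> 1 <= i <= n.-1 -> 1 <= j <= n.-1 -> (i == j.+1) || (j == i.+1) ->
  b_ij n d i j = b (n - 2) (d - 1)%R /\ p_ij n d i j = p (n - 2) (d - 1)%R.
Proof.
case: n => [|[|[|q]]] // _ /= hi hj hij.
rewrite (_ : q.+3 - 2 = q.+1); last by lia.
split; first by apply: b_lift.
have hi' : i.-1 <= q.+1 by lia.
have hj' : j.-1 <= q.+1 by lia.
have hij' : (i.-1 == j.-1.+1) || (j.-1 == i.-1.+1) by move: hij; lia.
have := p_lift hi' hj' hij' d.
by rewrite !prednK //; lia.
Qed.
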